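(* Let $n\ge 1$, $\sigma>0$, $b>0$, $\mathbf{a}\in\mathbb{R}^n$, let $\mathbf{D}\in\mathbb{R}^{n\times n}$ be a diagonal matrix with positive diagonal entries, and let $\mathbf{e}\in\mathbb{R}^n$ be the all-ones vector. Consider the problem $$\min_{\mathbf{x}\in\mathbb{R}^n}\ f(\mathbf{x})=\mathbf{x}^T\mathbf{a}+\tfrac{\sigma}{2}\mathbf{x}^T\mathbf{D}\mathbf{x}+\tfrac{\sigma}{2}(\mathbf{e}^T\mathbf{x})^2\quad\text{subject to } 0\le \mathbf{x}\le b\,\mathbf{e}.$$ Define $F:\mathbb{R}\to\mathbb{R}$ by $F(\tau)=\tau-\mathbf{e}^T P\big[-\tfrac{1}{\sigma}\mathbf{D}^{-1}(\mathbf{a}+\sigma\tau\mathbf{e});0,b\big]$. Let $\tau^*$ be a root of $F$, and set $\mathbf{x}^*=P\big[-\tfrac{1}{\sigma}\mathbf{D}^{-1}(\mathbf{a}+\sigma\tau^*\mathbf{e});0,b\big]$. Then $\mathbf{x}^*$ satisfies the first-order KKT condition $$\mathbf{x}^*-P\big[\mathbf{x}^*-\nabla f(\mathbf{x}^* );0,b\big]=0 .$$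
   Context: For $\mathbf{z}\in\mathbb{R}^n$, $P[\mathbf{z};0,b]$ denotes the componentwise projection of $\mathbf{z}$ onto the box $[0,b]^n$, i.e. $(P[\mathbf{z};0,b])_i=\min(\max(z_i,0),b)$. *)

(* Defs.v *)
From mathcomp Require Import all_boot all_order all_algebra.
Unset Printing Implicit Defensive.
Import Order.TTheory GRing.Theory Num.Theory.
Local Open Scope ring_scope.

Definition boxproj {R : realFieldType} {n : nat} (z : 'cV[R]_n) (b : R) : 'cV[R]_n :=
  \col_i Num.min (Num.max (z i 0) 0) b.

Definition ones (R : realFieldType) (n : nat) : 'cV[R]_n := const_mx 1.

Definition esum {R : realFieldType} {n : nat} (x : 'cV[R]_n) : R := \sum_i x i 0.

Definition fobj {R : realFieldType} {n : nat} (a : 'cV[R]_n) (D : 'M[R]_n)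
  (sigma : R) (x : 'cV[R]_n) : R :=
  (x^T *m a) 0 0 + sigma / 2 * (x^T *m D *m x) 0 0 + sigma / 2 * (esum x) ^+ 2.

(* Gradient of fobj for symmetric (here diagonal) D:
   grad f(x) = a + sigma D x + sigma (e^T x) e *)
Definition grad_f {R : realFieldType} {n : nat} (a : 'cV[R]_n) (D : 'M[R]_n)
  (sigma : R) (x : 'cV[R]_n) : 'cV[R]_n :=
  a + sigma *: (D *m x) + (sigma * esum x) *: (ones R n).

Definition xtau {R : realFieldType} {n : nat} (a : 'cV[R]_n) (D : 'M[R]_n)
  (sigma b tau : R) : 'cV[R]_n :=
  boxproj (- (sigma^-1) *: (invmx D *m (a + (sigma * tau) *: (ones R n)))) b.

Definition Ffun {R : realFieldType} {n : nat} (a : 'cV[R]_n) (D : 'M[R]_n)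
  (sigma b tau : R) : R :=
  tau - esum (xtau a D sigma b tau).

(* Main.v *)
Require Import Defs.
From mathcomp Require Import all_boot all_order all_algebra.
From mathcomp Require Import ring lra.
Import Order.TTheory GRing.Theory Num.Theory.
Local Open Scope ring_scope.

Lemma box_scalar (R : realFieldType) (b c y : R) (hb : 0 < b) (hc : 0 < c) :
  Num.min (Num.max y 0) b = Num.min (Num.max (Num.min (Num.max y 0) b - c * (Num.min (Num.max y 0) b - y)) 0) b.
Proof.
have hx : (y <= 0 /\ Num.min (Num.max y 0) b = 0) \/ (0 <= y <= b /\ Num.min (Num.max y 0) b = y)
   \/ (b <= y /\ Num.min (Num.max y 0) b = b).
  rewrite maxEle minEle; case h1 : (y <= 0); [case h2 : (0 <= b)|case h2 : (y <= b)].
  - by left; split.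
  - by move: h2; rewrite (ltW hb).
  - right; left; move/negbT: h1; rewrite -real_ltNge ?num_real // => h1; split => //; apply/andP; split; lra.
  - right; right; move/negbT: h2; rewrite -real_ltNge ?num_real // => h2; split => //; lra.
case: hx => [[h1 ->]|[[/andP[h1 h2] ->]|[h1 ->]]].
- have h0 : 0 <= - y by lra.
  have := mulr_ge0 (ltW hc) h0 => h5.
  have h : 0 - c * (0 - y) <= 0 by lra.
  by rewrite maxEle h minEle (ltW hb).
- rewrite subrr mulr0 subr0 maxEle minEle.
  case h3 : (y <= 0).
    have -> : y = 0 by apply/eqP; rewrite eq_le h3 h1.
    by rewrite (ltW hb).
  by rewrite h2.
- have h0 : 0 <= y - b by lra.
  have := mulr_ge0 (ltW hc) h0 => h5.
  have h : b <= b - c * (b - y) by lra.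
  rewrite maxEle minEle.
  have -> : (b - c * (b - y) <= 0) = false by apply/negbTE; rewrite -real_ltNge ?num_real //; lra.
  case h3 : (b - c * (b - y) <= b) => //.
  by apply/eqP; rewrite eq_le h3 h.
Qed.

Lemma boxprojE (R : realFieldType) n (z : 'cV[R]_n) b i :
  boxproj z b i 0 = Num.min (Num.max (z i 0) 0) b.
Proof. by rewrite /boxproj mxE. Qed.

Lemma gradE (R : realFieldType) n (a : 'cV[R]_n) D sigma x i :
  grad_f a D sigma x i 0 = a i 0 + sigma * (D *m x) i 0 + sigma * esum x.
Proof. by rewrite /grad_f !mxE mulr1. Qed.

Lemma subE (R : realFieldType) n (x y : 'cV[R]_n) i : (x - y) i 0 = x i 0 - y i 0.
Proof. by rewrite !mxE. Qed.

Lemma scaleE (R : realFieldType) n (c : R) (x : 'cV[R]_n) i : (c *: x) i 0 = c * x i 0.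
Proof. by rewrite !mxE. Qed.

Lemma diagmulE (R : realFieldType) n (d : 'rV[R]_n) (x : 'cV[R]_n) i :
  (diag_mx d *m x) i 0 = d 0 i * x i 0.
Proof. by rewrite mul_diag_mx mxE. Qed.

Theorem lemma4p1 (R : realFieldType) (n : nat) (hn : (1 <= n)%N)
  (sigma b : R) (hsigma : 0 < sigma) (hb : 0 < b)
  (a : 'cV[R]_n) (D : 'M[R]_n)
  (hDdiag : is_diag_mx D) (hDpos : forall i : 'I_n, 0 < D i i)
  (taustar : R) (hroot : Ffun a D sigma b taustar = 0) :
  let xstar := xtau a D sigma b taustar in
  xstar - boxproj (xstar - grad_f a D sigma xstar) b = 0.
Proof.
move=> xstar.
have hes : esum xstar = taustar by move: hroot; rewrite /Ffun => /eqP; rewrite subr_eq0 => /eqP.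
case/diag_mxP: hDdiag => d hD.
have hd : forall i, d 0 i = D i i by move=> i; rewrite hD mxE eqxx mulr1n.
have hU : D \in unitmx.
  rewrite unitmxE hD det_diag unitfE; apply/prodf_neq0 => i _.
  by rewrite hd; apply: lt0r_neq0.
set u := a + (sigma * taustar) *: ones R n.
set w := invmx D *m u.
have hDw : D *m w = u by rewrite /w mulKVmx.
have hDwi : forall i, D i i * w i 0 = u i 0.
  by move=> i; rewrite -hDw [in RHS]hD mul_diag_mx [in RHS]mxE hd.
apply/matrixP => i j; rewrite (ord1 j) {j}.
rewrite subE [RHS]mxE; apply/eqP; rewrite subr_eq0; apply/eqP.
rewrite boxprojE subE gradE hes.
have hxD : (D *m xstar) i 0 = D i i * xstar i 0 by rewrite [in LHS]hD diagmulE hd.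
rewrite hxD.
have -> : xstar i 0 = Num.min (Num.max (- sigma^-1 * w i 0) 0) b.
  by rewrite /xstar /xtau boxprojE scaleE.
set y := - sigma^-1 * w i 0.
have hsn : sigma != 0 by apply: lt0r_neq0.
have ha : a i 0 = u i 0 - sigma * taustar.
  by rewrite /u /ones !mxE mulr1 addrK.
rewrite ha -hDwi.
set x := Num.min (Num.max y 0) b.
have -> : x - (D i i * w i 0 - sigma * taustar + sigma * (D i i * x) + sigma * taustar)
   = x - (sigma * D i i) * (x - y).
  by rewrite /y; field.
rewrite /x /y. have hc : 0 < sigma * D i i by apply: mulr_gt0.
exact: (box_scalar _ _ _ _ hb hc).
Qed.
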